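(* Let $N\ge 1$ be an integer, let $0<\sigma_0^2<\sigma_1^2$, and let $\alpha,\beta\in(0.5,1)$. Define $\eta_0:=\Gamma^{-1}\!\left(\tfrac N2,(1-\alpha)\Gamma(\tfrac N2)\right)\sigma_0^2$ and let $\eta_1<\eta_2$ be the GLRT thresholds, i.e., the two solutions of $L_1(\eta)=\lambda_1$ for the constant $\lambda_1>1$ chosen so that $$\frac{\Gamma(\frac N2,\frac{\eta_1}{\sigma_1^2})-\Gamma(\frac N2,\frac{\eta_2}{\sigma_1^2})}{\Gamma(\frac N2)}=\beta .$$ Let $\eta_1^*:=\Gamma^{-1}\!\left(\tfrac N2,(1-\alpha)\Gamma(\tfrac N2)\right)\sigma_0^2$ and let $\eta_2^*\neq\eta_1^*$ be a solution of $\left(\frac{\eta_1^*}{\eta_2^*}\right)^{N/2}\exp\!\left(\frac{\eta_2^*-\eta_1^*}{2\sigma_1^2}\right)=1$. If $$\beta>\frac{\Gamma(\frac N2,\frac{\eta_1^*}{\sigma_1^2})}{\Gamma(\frac N2)}-\frac{\Gamma(\frac N2,\frac{\eta_2^*}{\sigma_1^2})}{\Gamma(\frac N2)},$$ then the decision regions $\mathcal{R}_0=\{Y<\eta_0\}$ and $\mathcal{R}_1=\{\eta_1<Y<\eta_2\}$ overlap, i.e., $\eta_1<\eta_0$.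
   Context: Observations $y_0,\dots,y_{N-1}$ are i.i.d. $\mathcal{N}(0,\sigma^2)$; the test statistic is $Y=\sum_{n=0}^{N-1}y_n^2$. Hypotheses: $\mathcal{H}_0:\sigma^2=\sigma_0^2$ (channel idle), $\mathcal{H}_1:\sigma^2=\sigma_1^2$ (legitimate user only), $\mathcal{H}_2:\sigma^2\in(\sigma_0^2,\sigma_1^2)\cup(\sigma_1^2,\infty)$ (illegitimate user present). $\Gamma(a)$ is the Gamma function, $\Gamma(a,x)=\int_x^\infty t^{a-1}e^{-t}dt$ the upper incomplete Gamma function, and $\Gamma^{-1}(a,\cdot)$ the inverse of $x\mapsto\Gamma(a,x)$. The GLRT likelihood ratio as a function of $Y>0$ is $L_1(Y)=\left(\frac{N\sigma_1^2}{Y}\right)^{N/2}\exp\!\left(\frac{Y}{2\sigma_1^2}-\frac N2\right)$, which decreases on $(0,N\sigma_1^2)$, increases on $(N\sigma_1^2,\infty)$ and has minimum value $1$; so for $\lambda_1>1$ the equation $L_1(\eta)=\lambda_1$ has two solutions $\eta_1<N\sigma_1^2<\eta_2$. The detection subproblem declares $\mathcal{H}_0$ on $\mathcal{R}_0=\{Y<\eta_0\}$; the recognition subproblem declares $\mathcal{H}_1$ on $\mathcal{R}_1=\{\eta_1<Y<\eta_2\}$; ''overlapping'' means $\mathcal{R}_0\cap\mathcal{R}_1\neq\emptyset$, i.e., $\eta_1<\eta_0$. *)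

(* Defs.v *)
From HB Require Import structures.
From mathcomp Require Import all_boot all_order all_algebra.
From mathcomp Require Import all_classical all_reals all_analysis.
Set Implicit Arguments. Unset Strict Implicit. Unset Printing Implicit Defensive.
Import Order.TTheory GRing.Theory Num.Theory.
Local Open Scope classical_set_scope.
Local Open Scope ring_scope.

Definition upper_gamma (R : realType) (a x : R) : R :=
  Rintegral (@lebesgue_measure R) `[x, +oo[%classic
    (fun t : R => t `^ (a - 1) * expR (- t)).

Definition Gamma (R : realType) (a : R) : R := upper_gamma a 0.

(* GLRT likelihood ratio  L_1(Y) = (N σ1² / Y)^(N/2) exp(Y/(2σ1²) - N/2);
   s1 stands for the variance σ1². *)
Definition L1 (R : realType) (N : nat) (s1 Y : R) : R :=
  (N%:R * s1 / Y) `^ (N%:R / 2) * expR (Y / (2 * s1) - N%:R / 2).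

(* Main.v *)
Require Import Defs.
From HB Require Import structures.
From mathcomp Require Import all_boot all_order all_algebra.
From mathcomp Require Import all_classical all_reals all_analysis.
From mathcomp Require Import ring lra measurable_realfun exponential_distribution.
Import Order.TTheory GRing.Theory Num.Theory.
Local Open Scope ring_scope.

Section H.
Variable R : realType.

Lemma ln_lt_sub1 (v : R) : 0 < v -> v != 1 -> ln v < v - 1.
Proof.
move=> v0 v1.
have h : ln v != 0.
  apply/eqP => h0; move/eqP: v1; apply; by rewrite -(lnK v0) h0 expR0.
have := expR_gt1Dx h; rewrite lnK //; lra.
Qed.

Lemma ln_le_sub1 (v : R) : 0 < v -> ln v <= v - 1.
Proof.
move=> v0; have [->|v1] := eqVneq v 1; first by rewrite ln1; lra.
exact/ltW/ln_lt_sub1.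
Qed.

Lemma ln_div (y z : R) : 0 < y -> 0 < z -> ln (y / z) = ln y - ln z.
Proof. by move=> y0 z0; rewrite lnM ?posrE ?invr_gt0 // lnV ?posrE. Qed.

Definition H (s1 a Y : R) := Y / (2 * s1) - a * ln Y.

Lemma H_dec (s1 a Y Z : R) : 0 < a -> 0 < s1 -> 0 < Y -> Y < Z -> Z <= 2 * a * s1 ->
  H s1 a Z < H s1 a Y.
Proof.
move=> a0 s0 Y0 YZ Za.
have Z0 : 0 < Z by lra.
have u1 : Y / Z != 1.
  apply/eqP => h; move: YZ; rewrite -[Y](@divfK _ Z) ?h ?mul1r; [lra | lra].
have := @ln_lt_sub1 (Y/Z) (divr_gt0 Y0 Z0) u1; rewrite ln_div //.
set d := ln Z - ln Y => hd.
have hd' : Z * d > Z - Y.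
  have : Z * (ln Y - ln Z) < Z * (Y / Z - 1) by rewrite ltr_pM2l.
  rewrite !mulrBr mulr1 [Z * (Y / Z)]mulrC divfK; last lra.
  rewrite /d; lra.
have dpos : 0 < d by rewrite -(pmulr_rgt0 _ Z0); lra.
set w := (2 * s1)^-1.
have w0 : 0 < w by rewrite invr_gt0; lra.
have ws : w * (2 * s1) = 1 by rewrite mulVf //; lra.
have e1 : (Z - Y) * w < Z * d * w by rewrite ltr_pM2r.
have e2 : Z * d * w <= 2 * a * s1 * d * w.
  by rewrite ler_pM2r // ler_pM2r.
have e3 : 2 * a * s1 * d * w = a * d.
  by transitivity (a * d * (w * (2 * s1))); [ring | rewrite ws mulr1].
have : (Z - Y) * w < a * d by lra.
rewrite /H /d -/w mulrBr mulrBl => h.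
lra.
Qed.

Lemma H_inc (s1 a Y Z : R) : 0 < a -> 0 < s1 -> 2 * a * s1 <= Y -> Y < Z ->
  H s1 a Y < H s1 a Z.
Proof.
move=> a0 s0 Ya YZ.
have Y0 : 0 < Y by have := mulr_gt0 (mulr_gt0 (ltr0n R 2 : 0 < 2%:R) a0) s0; lra.
have Z0 : 0 < Z by lra.
have u1 : Z / Y != 1.
  apply/eqP => h; move: YZ; rewrite -[Z](@divfK _ Y) ?h ?mul1r; [lra | lra].
have := @ln_lt_sub1 (Z/Y) (divr_gt0 Z0 Y0) u1; rewrite ln_div //.
set d := ln Z - ln Y => hd.
have hd' : Y * d < Z - Y.
  have : Y * d < Y * (Z / Y - 1) by rewrite ltr_pM2l.
  by rewrite !mulrBr mulr1 [Y * (Z / Y)]mulrC divfK; lra.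
have dpos : 0 < d.
  have : ln Y < ln Z by rewrite ltr_ln ?posrE.
  rewrite /d; lra.
set w := (2 * s1)^-1.
have w0 : 0 < w by rewrite invr_gt0; lra.
have ws : w * (2 * s1) = 1 by rewrite mulVf //; lra.
have e1 : Y * d * w < (Z - Y) * w by rewrite ltr_pM2r.
have e2 : 2 * a * s1 * d * w <= Y * d * w.
  by rewrite ler_pM2r // ler_pM2r.
have e3 : 2 * a * s1 * d * w = a * d.
  by transitivity (a * d * (w * (2 * s1))); [ring | rewrite ws mulr1].
have : a * d < (Z - Y) * w by lra.
rewrite /H /d -/w mulrBr mulrBl => h.
lra.
Qed.

Lemma L1E (N : nat) (s1 Y : R) : (1 <= N)%N -> 0 < s1 -> 0 < Y ->
  L1 N s1 Y = expR (N%:R / 2 * ln (N%:R * s1) - N%:R / 2 + H s1 (N%:R / 2) Y).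
Proof.
move=> N1 s0 Y0.
have N0 : 0 < N%:R :> R by rewrite ltr0n.
have B0 : 0 < N%:R * s1 / Y by rewrite divr_gt0 // mulr_gt0.
rewrite /L1 /powR gt_eqF // -expRD; congr expR.
rewrite ln_div ?mulr_gt0 // /H; ring.
Qed.

Lemma starE (a s1 e1 e2 : R) : 0 < e1 -> 0 < e2 ->
  (e1 / e2) `^ a * expR ((e2 - e1) / (2 * s1)) = 1 -> H s1 a e1 = H s1 a e2.
Proof.
move=> e10 e20.
rewrite /powR gt_eqF ?divr_gt0 // -expRD => h.
have {h} := expR_inj (etrans h (esym (@expR0 R))).
rewrite ln_div // /H mulrBl => h; lra.
Qed.
End H.

Section G.
Variable R : realType.
Local Open Scope classical_set_scope.

Lemma powR_bound (b x : R) : 0 < x ->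
  exists2 C : R, 0 < C & forall t, x <= t -> t `^ b <= C * expR (t / 2).
Proof.
move=> x0.
have [b0|b0] := leP 0 b.
- pose m := 2 * b + 1; have m0 : 0 < m by rewrite /m; lra.
  exists (expR (b * (ln m - 1))); first exact: expR_gt0.
  move=> t xt; have t0 : 0 < t by lra.
  rewrite /powR gt_eqF // -expRD ler_expR.
  have h := @ln_le_sub1 R _ (divr_gt0 t0 m0); rewrite ln_div // in h.
  have h2 : b * (ln t - ln m) <= b * (t / m - 1) by rewrite ler_wpM2l.
  have bm : b / m <= 2^-1 by rewrite ler_pdivrMr // /m; lra.
  have h3 : b * (t / m) <= t / 2.
    rewrite mulrA [b * t]mulrC -mulrA; apply: ler_wpM2l => //; lra.
  rewrite !mulrBr mulr1 in h2 *; lra.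
- exists (expR (b * ln x)); first exact: expR_gt0.
  move=> t xt; have t0 : 0 < t by lra.
  rewrite /powR gt_eqF // -expRD ler_expR.
  have : ln x <= ln t by rewrite ler_ln ?posrE.
  rewrite -subr_ge0 => /(mulr_le0_ge0 (ltW b0)); rewrite mulrBr.
  have : 0 <= t / 2 by apply: divr_ge0; lra.
  lra.
Qed.


Definition gf (a t : R) := t `^ (a - 1) * expR (- t).

Lemma gf_meas (a : R) (D : set R) : measurable_fun D (gf a).
Proof.
apply: measurable_funTS; apply: measurable_funM; first exact: measurable_powR.
by apply: measurableT_comp => //; exact: measurable_expR.
Qed.

Lemma gf_integrable (a x : R) : 0 < x ->
  (@lebesgue_measure R).-integrable `[x, +oo[ (EFin \o gf a).
Proof.
move=> x0.
have [C C0 hC] := @powR_bound (a - 1) x x0.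
eapply le_integrable; last first.
- apply: (integrableZl _ (2 * C)) => //.
  apply: (integrableS measurableT) => //.
  by apply: (@integrable_exponential_pdf R (2^-1)); rewrite invr_gt0; lra.
- move=> t /=; rewrite in_itv /= andbT => xt.
  have t0 : 0 < t by lra.
  rewrite exponential_pdfE; last lra.
  rewrite lee_fin.
  have gf0 : 0 <= gf a t by rewrite /gf mulr_ge0 ?powR_ge0 ?expR_ge0.
  rewrite !ger0_norm //; last by rewrite mulr_ge0 ?mulr_ge0 ?invr_ge0 ?expR_ge0; lra.
  have e : 2 * C * (2^-1 * expR (- 2^-1 * t)) = C * expR (t / 2) * expR (- t).
    rewrite -[RHS]mulrA -expRD.
    have -> : t / 2 + - t = - 2^-1 * t by field.
    by field.
  rewrite e /gf ler_wpM2r ?expR_ge0 //; exact: hC.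
- by apply/measurable_EFinP; exact: gf_meas.
- exact: measurable_itv.
Qed.

Lemma ug_lt (a x y : R) : 0 < x -> x < y -> upper_gamma a y < upper_gamma a x.
Proof.
move=> x0 xy.
rewrite /upper_gamma -/(gf a).
have hU : `[x, +oo[%classic = `[x, y[%classic `|` `[y, +oo[%classic.
  by rewrite -itv_bndbnd_setU // bnd_simp ltW.
rewrite hU Rintegral_setU //; last 2 first.
- by rewrite -hU; exact: (@gf_integrable a x x0).
- apply/disj_setPS => t [] /=; rewrite !in_itv /= andbT => /andP[_ ty] yt.
  exfalso; lra.
rewrite -/(gf a) ltrDr.
pose b := a - 1.
pose c := expR (Num.min (b * ln x) (b * ln y)) * expR (- y).
have c0 : 0 < c by rewrite mulr_gt0 ?expR_gt0.
have h2 : \int[lebesgue_measure]_(t in `[x, y[) (cst c t) = c * (y - x).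
  rewrite Rintegral_cst; last exact: measurable_itv.
  have := lebesgue_measure_itv `[x, y[%R; rewrite /= lte_fin xy => ->.
  by rewrite -EFinB.
have h1 : \int[lebesgue_measure]_(t in `[x, y[) (cst c t) <=
          \int[lebesgue_measure]_(t in `[x, y[) gf a t.
  apply: le_Rintegral.
  - exact: measurable_itv.
  - apply: measurable_bounded_integrable.
    + exact: measurable_itv.
    + have := lebesgue_measure_itv `[x, y[%R; rewrite /= lte_fin xy => ->.
      by rewrite -EFinB ltry.
    + exact: measurable_cst.
    + exact: bounded_cst.
  - apply: (integrableS _ _ _ (@gf_integrable a x x0)).
    + exact: measurable_itv.
    + exact: measurable_itv.
    + by move=> t /=; rewrite !in_itv /= andbT => /andP[].
  - move=> t /=; rewrite in_itv /= => /andP[xt ty].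
    have t0 : 0 < t by lra.
    rewrite /gf /c /powR gt_eqF //.
    apply: ler_pM; rewrite ?expR_ge0 // ler_expR; last lra.
    rewrite ge_min -/b.
    have lxt : ln x <= ln t by rewrite ler_ln ?posrE.
    have lty : ln t <= ln y by rewrite ler_ln ?posrE //; lra.
    have [b0|b0] := leP 0 b.
    + by apply/orP; left; rewrite ler_wpM2l.
    + by apply/orP; right; rewrite ler_wnM2l // ltW.
apply: lt_le_trans h1; rewrite h2.
by apply: mulr_gt0 => //; lra.
Qed.
End G.

Lemma ug_le (R : realType) (a x y : R) : 0 < x -> x <= y -> upper_gamma a y <= upper_gamma a x.
Proof.
move=> x0; rewrite le_eqVlt => /orP[/eqP -> //|xy].
exact/ltW/ug_lt.
Qed.

Theorem theorem1 (R : realType) (N : nat)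
    (s0 s1 alpha beta eta0 eta1 eta2 lambda1 eta1s eta2s : R) :
  (1 <= N)%N -> 0 < s0 -> s0 < s1 ->
  1 / 2 < alpha -> alpha < 1 -> 1 / 2 < beta -> beta < 1 ->
  0 < eta0 ->
  upper_gamma (N%:R / 2) (eta0 / s0) = (1 - alpha) * Gamma (N%:R / 2) ->
  1 < lambda1 ->
  0 < eta1 -> eta1 < N%:R * s1 -> N%:R * s1 < eta2 ->
  L1 N s1 eta1 = lambda1 -> L1 N s1 eta2 = lambda1 ->
  (upper_gamma (N%:R / 2) (eta1 / s1) - upper_gamma (N%:R / 2) (eta2 / s1))
    / Gamma (N%:R / 2) = beta ->
  0 < eta1s ->
  upper_gamma (N%:R / 2) (eta1s / s0) = (1 - alpha) * Gamma (N%:R / 2) ->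
  0 < eta2s -> eta2s <> eta1s ->
  (eta1s / eta2s) `^ (N%:R / 2) * expR ((eta2s - eta1s) / (2 * s1)) = 1 ->
  upper_gamma (N%:R / 2) (eta1s / s1) / Gamma (N%:R / 2)
    - upper_gamma (N%:R / 2) (eta2s / s1) / Gamma (N%:R / 2) < beta ->
  eta1 < eta0.
Proof.
move=> N1 s00 s01 _ _ hb1 _ eta00 hg0 _ e10 e1N Ne2 L1a L1b hbeta e1s0 hg1s
  e2s0 e2sne hstar hlt.
rewrite ltNge; apply/negP => e01.
set a := N%:R / 2 in hg0 hbeta hg1s hstar hlt L1a L1b.
have s10 : 0 < s1 by lra.
have N0 : 0 < N%:R :> R by rewrite ltr0n.
have a0 : 0 < a by rewrite /a divr_gt0.
have aN : 2 * a * s1 = N%:R * s1 by rewrite /a; field.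
have e0s : eta0 = eta1s.
  case: (ltgtP eta0 eta1s) => // h; exfalso.
  - have : eta0 / s0 < eta1s / s0 by rewrite ltr_pM2r ?invr_gt0.
    move/(@ug_lt R a _ _ (divr_gt0 eta00 s00)); rewrite hg0 hg1s; lra.
  - have : eta1s / s0 < eta0 / s0 by rewrite ltr_pM2r ?invr_gt0.
    move/(@ug_lt R a _ _ (divr_gt0 e1s0 s00)); rewrite hg0 hg1s; lra.
rewrite e0s in e01.
have H12 : H R s1 a eta1 = H R s1 a eta2.
  have := etrans L1a (esym L1b).
  rewrite !L1E //; last lra.
  move/expR_inj; lra.
have H12s : H R s1 a eta1s = H R s1 a eta2s by exact: starE.
have H1le : H R s1 a eta1 <= H R s1 a eta1s.
  move: e01; rewrite le_eqVlt => /orP[/eqP -> //|h].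
  by apply/ltW/H_dec => //; lra.
have e2sN : N%:R * s1 < eta2s.
  rewrite ltNge; apply/negP => h; exfalso.
  case: (ltgtP eta2s eta1s) => h'.
  - have := @H_dec R s1 a eta2s eta1s a0 s10 e2s0 h'; rewrite aN; lra.
  - have := @H_dec R s1 a eta1s eta2s a0 s10 e1s0 h'; rewrite aN; lra.
  - by apply: e2sne.
have e22s : eta2 <= eta2s.
  rewrite leNgt; apply/negP => h.
  have := @H_inc R s1 a eta2s eta2 a0 s10; rewrite aN => /(_ (ltW e2sN) h).
  lra.
set G := Gamma a in hbeta hlt.
have G1 : upper_gamma a (eta1 / s1) <= upper_gamma a (eta1s / s1).
  by apply: ug_le; rewrite ?divr_gt0 // ler_pM2r ?invr_gt0.
have G2 : upper_gamma a (eta2s / s1) <= upper_gamma a (eta2 / s1).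
  by apply: ug_le; rewrite ?divr_gt0 // ?ler_pM2r ?invr_gt0 //; lra.
have D0 : upper_gamma a (eta2 / s1) < upper_gamma a (eta1 / s1).
  by apply: ug_lt; rewrite ?divr_gt0 // ?ltr_pM2r ?invr_gt0 //; lra.
have G0 : 0 < G.
  rewrite ltNge; apply/negP => hG.
  have : (upper_gamma a (eta1 / s1) - upper_gamma a (eta2 / s1)) / G <= 0.
    by apply: mulr_ge0_le0; [lra | rewrite invr_le0].
  lra.
rewrite -hbeta -mulrBl ltr_pM2r ?invr_gt0 // in hlt.
lra.
Qed.
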